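(* The entropy of a runtime trace of a program compiled according to the principle that every machine code instruction that writes introduces maximal entropy is $32(n+m)$ bits, where $m$ is the number of input words and $n$ is the number of distinct arithmetic instructions that write in the trace, counted once only per set if they belong to a set of trailer instructions for the same location, and once each otherwise.
   Context: Setting (encrypted computing with chaotic compilation). A processor computes on encrypted 32-bit words. The compiler is stochastic: each compilation of the same source code produces machine code of identical structure and identical runtime trace structure, differing only in encrypted constants embedded in instructions. At each program point the compiler maintains an obfuscation scheme: for every register and memory location $l$, an offset $\Delta l\in\mathbb{Z}/2^{32}$ such that the plaintext stored in $l$ at runtime equals the nominal (programmer-intended) value plus $\Delta l$ (mod $2^{32}$). Every arithmetic instruction has an embedded encrypted constant that can be chosen to set the offset of the location it writes to any desired value. The trace $T$ is the runtime sequence of writes to registers and memory locations (viewed at the level of plaintext values beneath the encryption); it is a random variable over recompilations, and its entropy is $\mathrm{H}(T)=\mathbb{E}[-\log_2 f_T]$ where $f_T$ is its probability distribution. An input is a read in the trace of a location not previously written in the trace; its offset is specified by the scheme. The principle ''every instruction that writes introduces maximal entropy'' means each arithmetic instruction that writes chooses the new offset of its target location uniformly at random in $\mathbb{Z}/2^{32}$, independently of all other choices (input offsets likewise uniform and independent), except as forced by correctness: copy instructions preserve data exactly, and where two control paths join (ends of loops, after conditionals, subroutine returns, goto targets) the offset of each location must coincide on all joining paths. An instruction that adjusts the offset of a location $l$ to the final value common with a joining control path (the last write to $l$ before the join on its path) is a trailer instruction; trailer instructions for the same location at a join form a set sharing one common offset. Executing the same instruction again (or another instruction with an already-determined offset)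 adds no new choice. *)

(* Defs.v *)
From HB Require Import structures.
From mathcomp Require Import all_boot all_order all_algebra.
From mathcomp Require Import reals exp.
From Stdlib Require List.
Set Implicit Arguments. Unset Strict Implicit. Unset Printing Implicit Defensive.
Import Order.TTheory GRing.Theory Num.Theory.
Local Open Scope ring_scope.

(* Plaintext 32-bit words: Z / 2^32 (2^32 > 1, so 'Z_ is the genuine ring). *)
Definition word_bits : nat := 32.
Definition word := 'Z_(2 ^ word_bits).

(* Every event carries the NOMINAL (programmer-intended) value it
   reads/writes; the plaintext observed is nominal + offset.
   - [Read l v]    : read of location l (operand fetch).
   - [Arith i l v] : arithmetic instruction i writes location l.
   - [Copy d s v]  : copy instruction: reads s, writes d, preserving data. *)
Inductive event (L I : Type) :=
| Read of L & word
| Arith of I & L & word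
| Copy of L & L & word.
Arguments Read {L I}.
Arguments Arith {L I}.
Arguments Copy {L I}.

(* Choice index of an arithmetic instruction: trailer instructions of the
   same trailer set share one choice (inr s); every other instruction has
   its own choice (inl i). *)
Definition choice_of (I S : Type) (trailer : I -> option S) (i : I) : I + S :=
  match trailer i with Some s => inr s | None => inl i end.

Definition upd (L : eqType) (st : L -> word) (l : L) (o : word) : L -> word :=
  fun x => if x == l then o else st x.

(* Plaintext values of the trace, given the offset state [st] (initially the
   input offsets) and the offsets chosen by the arithmetic instructions [cg]. *)
Fixpoint run (L : eqType) (I S : Type) (trailer : I -> option S)
    (cg : I + S -> word) (st : L -> word) (tr : seq (event L I)) : seq word :=
  match tr with
  | [::] => [::]
  | Read l v :: tr' => (v + st l) :: run trailer cg st tr'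
  | Arith i l v :: tr' =>
      let o := cg (choice_of trailer i) in (v + o) :: run trailer cg (upd st l o) tr'
  | Copy d s v :: tr' =>
      let o := st s in (v + o) :: run trailer cg (upd st d o) tr'
  end.

(* A compilation = the random choices: one uniform offset per input location
   and one uniform offset per (arithmetic instruction | trailer set). *)
Definition Omega (L I S : finType) : finType :=
  ({ffun L -> word} * {ffun (I + S)%type -> word})%type.

Definition trace (L I S : finType) (trailer : I -> option S)
    (tr : seq (event L I)) (w : Omega L I S) : seq word :=
  run trailer w.2 w.1 tr.

Definition log2 (R : realType) (x : R) : R := ln x / ln 2.

Definition entropy (R : realType) (Om : finType) (X : eqType) (T : Om -> X) : R :=
  \sum_(w : Om)
     (- log2 (#|[pred w' : Om | T w' == T w]|%:R / #|Om|%:R)) / #|Om|%:R.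

Fixpoint inputs_aux (L : eqType) (I : Type) (written : seq L)
    (tr : seq (event L I)) : seq L :=
  match tr with
  | [::] => [::]
  | Read l _ :: tr' =>
      (if l \in written then [::] else [:: l]) ++ inputs_aux written tr'
  | Arith _ l _ :: tr' => inputs_aux (l :: written) tr'
  | Copy d s _ :: tr' =>
      (if s \in written then [::] else [:: s]) ++ inputs_aux (d :: written) tr'
  end.

Definition num_inputs (L : eqType) (I : Type) (tr : seq (event L I)) : nat :=
  size (undup (inputs_aux [::] tr)).

Fixpoint arith_instrs (L I : Type) (tr : seq (event L I)) : seq I :=
  match tr with
  | [::] => [::]
  | Arith i _ _ :: tr' => i :: arith_instrs tr'
  | _ :: tr' => arith_instrs tr'
  end.

Definition num_writes (L : Type) (I S : eqType) (trailer : I -> option S)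
    (tr : seq (event L I)) : nat :=
  size (undup [seq choice_of trailer i | i <- arith_instrs tr]).

Definition trailers_same_loc (L I S : Type) (trailer : I -> option S)
    (tloc : S -> L) (tr : seq (event L I)) : Prop :=
  forall i l v, List.In (Arith i l v) tr ->
    forall s, trailer i = Some s -> l = tloc s.

(* Main.v *)
Require Import Defs.
From HB Require Import structures.
From mathcomp Require Import all_boot all_order all_algebra.
From mathcomp Require Import reals exp.
Set Implicit Arguments. Unset Strict Implicit. Unset Printing Implicit Defensive.
Import Order.TTheory GRing.Theory Num.Theory.

Lemma cons_inj (T : Type) (a b : T) s t : a :: s = b :: t -> a = b /\ s = t.
Proof. by case=> -> ->. Qed.

Section Run.
Variables (L I S : eqType) (trailer : I -> option S).

Definition cs (tr : seq (event L I)) := [seq choice_of trailer i | i <- arith_instrs tr].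

Lemma inputs_notin (tr : seq (event L I)) : forall W x,
  x \in inputs_aux W tr -> x \notin W.
Proof.
elim: tr => [|e tr IH] W x //=.
case: e => [l v|i l v|d s v] /=.
- rewrite mem_cat; case/orP => [|/IH //]; case: ifP => H; rewrite ?in_nil // inE => /eqP ->; by rewrite H.
- by move/IH; rewrite inE negb_or => /andP[].
- rewrite mem_cat; case/orP => [|/IH]; first by case: ifP => H; rewrite ?in_nil // inE => /eqP ->; rewrite H.
  by rewrite inE negb_or => /andP[].
Qed.

Lemma run_agree (tr : seq (event L I)) : forall W st st' cg cg',
  {in W, st =1 st'} ->
  (run trailer cg st tr = run trailer cg' st' tr <->
   {in inputs_aux W tr, st =1 st'} /\ {in cs tr, cg =1 cg'}).
Proof.
rewrite /cs; elim: tr => [|e tr IH] W st st' cg cg' HW /=.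
  by split => // _; split => x; rewrite in_nil.
case: e => [l v|i l v|d s v] /=.
- split.
  + move=> /(@cons_inj word) [] /(addrI _) Hl /(IH _ _ _ _ _ HW) [H1 H2]; split => // x.
    rewrite mem_cat; case/orP => [|/H1] //; case: ifP => _ //; rewrite inE => /eqP -> //.
  + case=> H1 H2.
    have Hl : st l = st' l.
      case: (boolP (l \in W)) => [/HW //|nW]; apply: H1; rewrite mem_cat (negbTE nW) mem_head //.
    rewrite Hl; congr cons; apply/(IH _ _ _ _ _ HW); split => // x Hx; apply: H1.
    by rewrite mem_cat Hx orbT.
- split.
  + move=> /(@cons_inj word) [] /(addrI _) Hc.
    have HW' : {in l :: W, upd st l (cg (choice_of trailer i)) =1 upd st' l (cg' (choice_of trailer i))}.
      by move=> x; rewrite inE /upd; case: eqP => //= _ /HW.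
    move/(IH _ _ _ _ _ HW') => [H1 H2]; split.
    * move=> x Hx; move: (H1 x Hx) (inputs_notin Hx); rewrite /upd inE; case: eqP => //.
    * by move=> x; rewrite inE => /orP[/eqP ->|/H2].
  + case=> H1 H2.
    have Hc : cg (choice_of trailer i) = cg' (choice_of trailer i) by apply: H2; rewrite mem_head.
    rewrite Hc; congr cons.
    have HW' : {in l :: W, upd st l (cg' (choice_of trailer i)) =1 upd st' l (cg' (choice_of trailer i))}.
      by move=> x; rewrite inE /upd; case: eqP => //= _ /HW.
    apply/(IH _ _ _ _ _ HW'); split.
    * move=> x Hx; rewrite /upd; case: eqP => [e|_]; last exact: H1.
      by move: (inputs_notin Hx); rewrite inE e eqxx.
    * by move=> x Hx; apply: H2; rewrite inE Hx orbT.
- split.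
  + move=> /(@cons_inj word) [] /(addrI _) Hs.
    have HW' : {in d :: W, upd st d (st s) =1 upd st' d (st' s)}.
      by move=> x; rewrite inE /upd; case: eqP => //= _ /HW.
    move/(IH _ _ _ _ _ HW') => [H1 H2]; split => // x.
    rewrite mem_cat; case/orP => [|Hx].
      by case: ifP => _ //; rewrite inE => /eqP ->.
    move: (H1 x Hx) (inputs_notin Hx); rewrite /upd inE; case: eqP => //.
  + case=> H1 H2.
    have Hs : st s = st' s.
      case: (boolP (s \in W)) => [/HW //|nW]; apply: H1; rewrite mem_cat (negbTE nW) mem_head //.
    rewrite Hs; congr cons.
    have HW' : {in d :: W, upd st d (st' s) =1 upd st' d (st' s)}.
      by move=> x; rewrite inE /upd; case: eqP => //= _ /HW.
    apply/(IH _ _ _ _ _ HW'); split => // x Hx.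
    rewrite /upd; case: eqP => [e|_]; last by apply: H1; rewrite mem_cat Hx orbT.
    by move: (inputs_notin Hx); rewrite inE e eqxx.
Qed.
End Run.
Lemma count_agree (T V : finType) (s : seq T) (g : T -> V) :
  #|[pred f : {ffun T -> V} | all (fun x => f x == g x) s]| * #|V| ^ #|[pred x | x \in s]|
  = #|V| ^ #|T|.
Proof.
pose F : T -> pred V := fun x => if x \in s then pred1 (g x) else predT.
have -> : #|[pred f : {ffun T -> V} | all (fun x => f x == g x) s]| = #|family F|.
  apply: eq_card => f; rewrite !inE; apply/allP/familyP => H x.
  - by rewrite /F; case: ifP => Hx //; rewrite inE; exact: H.
  - by move=> Hx; have := H x; rewrite /F Hx inE.
rewrite card_family foldrE big_image /=.
have -> : \prod_(j in T) #|F j| = #|V| ^ #|[pred x | x \notin s]|.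
  rewrite -prod_nat_const [RHS]big_mkcond /=; apply: eq_bigr => x _.
  rewrite /F !inE; case: (x \in s) => //=; first exact: card1.
rewrite -expnD; congr (_ ^ _).
rewrite -(cardC [pred x | x \in s]) addnC; congr (_ + _); apply: eq_card => x; by rewrite !inE.
Qed.

Theorem lemma1 (R : realType) (L I S : finType) (trailer : I -> option S)
    (tloc : S -> L) (tr : seq (event L I)) :
  trailers_same_loc trailer tloc tr ->
  entropy R (trace trailer tr) =
    ((32 * (num_writes trailer tr + num_inputs tr))%:R)%R.
Proof.
move=> _.
have Ha : num_inputs tr = #|[pred x | x \in inputs_aux [::] tr]|.
  rewrite /num_inputs -(card_uniqP (undup_uniq _)); apply: eq_card => x.
  by rewrite !inE mem_undup.
have Hc : num_writes trailer tr = #|[pred x | x \in cs trailer tr]|.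
  rewrite /num_writes -(card_uniqP (undup_uniq _)); apply: eq_card => x.
  by rewrite !inE mem_undup.
have HN : #|word| = 2 ^ word_bits.
  by rewrite card_ord Zp_cast // -{1}(expn0 2) ltn_exp2l.
have Hfib : forall w : Omega L I S,
   (#|[pred w' : Omega L I S | trace trailer tr w' == trace trailer tr w]| *
    #|word| ^ (#|[pred x | x \in inputs_aux [::] tr]| + #|[pred x | x \in cs trailer tr]|)
   = #|Omega L I S|)%N.
  move=> [f1 f2].
  have -> : #|[pred w' : Omega L I S | trace trailer tr w' == trace trailer tr (f1, f2)]| =
     #|[predX [pred f : {ffun L -> word} | all (fun x => f x == f1 x) (inputs_aux [::] tr)]
       & [pred f : {ffun (I + S)%type -> word} | all (fun x => f x == f2 x) (cs trailer tr)]]|.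
    apply: eq_card => [[g1 g2]]; rewrite !inE /trace /=.
    have HW : {in [::], g1 =1 f1} by [].
    apply/eqP/andP.
    - move/(@run_agree _ _ _ trailer tr [::] g1 f1 g2 f2 HW) => [H1 H2].
      by split; apply/allP => x Hx; apply/eqP; [exact: H1|exact: H2].
    - case=> /allP H1 /allP H2.
      apply/(@run_agree _ _ _ trailer tr [::] g1 f1 g2 f2 HW).
      by split => x Hx; apply/eqP; [exact: H1|exact: H2].
  rewrite cardX expnD mulnACA !count_agree card_prod !card_ffun //.
have Hom : (0 < #|Omega L I S|)%N.
  by rewrite card_prod !card_ffun muln_gt0 !expn_gt0 HN expn_gt0.
have l2 : (ln (2:R) != 0)%R by rewrite gt_eqF // ln_gt0 // ltr1n.
rewrite /entropy.
set k := (_ + _)%N.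
transitivity (\sum_(w : Omega L I S) ((32 * k)%:R / #|Omega L I S|%:R : R))%R.
  apply: eq_bigr => w _; congr (_ / _)%R.
  have Hw := Hfib w.
  have fpos : (0 < #|[pred w' : Omega L I S | trace trailer tr w' == trace trailer tr w]|)%N.
    by move: Hom; rewrite -Hw muln_gt0 => /andP[].
  rewrite -[X in (_ / X%:R)%R]Hw natrM invfM mulrA divff ?mul1r; last by rewrite pnatr_eq0 -lt0n.
  rewrite /log2 lnV; last by rewrite posrE ltr0n expn_gt0 HN expn_gt0.
  rewrite HN -expnM natrX lnXn // mulNr opprK -[(_ *+ _)%R]mulr_natl mulfK //.
  by rewrite /k /word_bits Ha Hc addnC.
rewrite (eq_bigl (fun w => w \in Omega L I S)) // sumr_const -[(_ *+ #|_|)%R]mulr_natr divfK // pnatr_eq0 -lt0n.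
done.
Qed.
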